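(* (5) $\lambda(L_1\sqcup C_2)$ is isomorphic to $L_1\sqcup L_1\sqcup C_2$. (6) $\lambda(L_2\times C_2)$ is isomorphic to $\big(L_1\sqcup(L_2\times L_2)\sqcup L_1\big)\times C_2$.
   Context: $\lambda(X)$ is the set of maximal linked upfamilies on $X$ (an upfamily is a family of nonempty subsets closed under supersets; linked means any two members intersect; maximal linked means not properly contained in another linked upfamily), with operation $\mathcal A*\mathcal B=\big\langle \bigcup_{a\in A} a*B_a : A\in\mathcal A,\ \{B_a\}_{a\in A}\subset\mathcal B\big\rangle$, where $\langle\mathcal C\rangle=\{A\subset X:\exists C\in\mathcal C,\ C\subset A\}$. $C_n=\{z\in\mathbb C:z^n=1\}$; $L_n=\{0,\dots,n-1\}$ with operation $\min$. For semigroups $(X,* )$, $(Y,\star)$, the disjoint ordered union $X\sqcup Y$ is the disjoint union with operation $x\circ y=x*y$ for $x,y\in X$; $x\circ y=x$ if $x\in X,y\in Y$; $x\circ y=y$ if $x\in Y,y\in X$; $x\circ y=x\star y$ for $x,y\in Y$ (this operation is associative: $(X\sqcup Y)\sqcup Z=X\sqcup(Y\sqcup Z)$). *)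

(* Defs.v *)
From HB Require Import structures.
From mathcomp Require Import all_boot.
Set Implicit Arguments. Unset Strict Implicit. Unset Printing Implicit Defensive.

Record fsemigroup := FSG { sg_car : finType; sg_op : sg_car -> sg_car -> sg_car }.

Section Lambda.
Variable X : finType.
Variable op : X -> X -> X.

Definition upfamily (A : {set {set X}}) : Prop :=
  forall a, a \in A -> a != set0 /\ (forall b : {set X}, a \subset b -> b \in A).

Definition linked (A : {set {set X}}) : Prop :=
  forall a b, a \in A -> b \in A -> a :&: b != set0.

Definition maxlinked (A : {set {set X}}) : Prop :=
  [/\ upfamily A, linked A &
      forall B, upfamily B -> linked B -> A \subset B -> B = A].

Definition lmul (a : X) (B : {set X}) : {set X} := [set op a b | b in B].

Definition lam_op (cA cB : {set {set X}}) : {set {set X}} :=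
  [set C : {set X} | [exists A in cA, exists f : {ffun X -> {set X}},
      [forall a in A, f a \in cB] && (\bigcup_(a in A) lmul a (f a) \subset C)]].
End Lambda.

Definition lambda_iso (S T : fsemigroup) : Prop :=
  exists g : sg_car T -> {set {set sg_car S}},
    [/\ injective g,
        (forall F, maxlinked F <-> (exists t, g t = F)) &
        forall t t', g (sg_op t t') = lam_op (@sg_op S) (g t) (g t')].

Definition L (n : nat) : fsemigroup :=
  @FSG 'I_n (fun a b => if (a <= b)%N then a else b).

Definition C (n : nat) : fsemigroup :=
  @FSG 'I_n.+1 (fun a b => inord ((a + b) %% n.+1)).
Definition C2 := C 1.

Definition sg_union (S T : fsemigroup) : fsemigroup :=
  @FSG (sg_car S + sg_car T)%type
    (fun x y => match x, y with
                | inl a, inl b => inl (sg_op a b)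
                | inl a, inr _ => inl a
                | inr _, inl b => inl b
                | inr a, inr b => inr (sg_op a b)
                end).

Definition sg_prod (S T : fsemigroup) : fsemigroup :=
  @FSG (sg_car S * sg_car T)%type
    (fun x y => (sg_op x.1 y.1, sg_op x.2 y.2)).

(* Submission.v *)
Require Import Defs.
From HB Require Import structures.
From mathcomp Require Import all_boot.
Set Implicit Arguments. Unset Strict Implicit. Unset Printing Implicit Defensive.

Fixpoint allm (k : nat) : seq (seq bool) :=
  if k is k'.+1 then [seq true :: m | m <- allm k'] ++ [seq false :: m | m <- allm k']
  else [:: [::]].

Lemma mem_cons_map (b b' : bool) m (A : seq (seq bool)) :
  (b' :: m \in [seq b :: x | x <- A]) = (b' == b) && (m \in A).
Proof.
apply/mapP/andP => [[x xA [-> ->]]|[/eqP -> mA]]; first by rewrite eqxx.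
by exists m.
Qed.

Lemma mem_allm k m : (m \in allm k) = (size m == k).
Proof.
elim: k m => [|k IH] [|b m] //=; rewrite ?in_cons ?in_nil //=.
- rewrite mem_cat (_ : (0 == k.+1) = false) //; apply/negbTE.
  by rewrite negb_or; apply/andP; split; apply/mapP => -[].
- by rewrite mem_cat !mem_cons_map IH eqSS; case: b; rewrite /= ?andbF ?orbF.
Qed.

Fixpoint subs (T : Type) (s : seq T) : seq (seq T) :=
  if s is x :: s' then [seq x :: r | r <- subs s'] ++ subs s' else [:: [::]].

Lemma filter_subs (T : eqType) (s : seq T) (P : pred T) : filter P s \in subs s.
Proof.
elim: s => [|x s IH] //=; rewrite mem_cat; case: (P x).
  by rewrite map_f. by rewrite IH orbT.
Qed.

Section Gen.
Variable X : finType.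
Variable xs : seq X.
Variable x0 : X.
Hypothesis Hu : uniq xs.
Hypothesis Hall : forall x, x \in xs.
Local Notation n := (size xs).
Local Notation M := (allm (size xs)).

Definition set_of (m : seq bool) : {set X} := [set x | nth false m (index x xs)].
Definition mask (b : {set X}) : seq bool := [seq x \in b | x <- xs].

Lemma size_mask b : size (mask b) = n.
Proof. by rewrite size_map. Qed.

Lemma nth_mask b i : i < n -> nth false (mask b) i = (nth x0 xs i \in b).
Proof. by move=> Hi; rewrite (nth_map x0). Qed.

Lemma nth_mask_index b z : nth false (mask b) (index z xs) = (z \in b).
Proof. by rewrite nth_mask ?index_mem ?Hall // nth_index. Qed.

Lemma mask_set m : size m = n -> mask (set_of m) = m.
Proof.
move=> Hm; apply: (@eq_from_nth _ false); first by rewrite size_mask.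
by move=> i; rewrite size_mask => Hi; rewrite nth_mask // in_set index_uniq.
Qed.

Lemma set_mask b : set_of (mask b) = b.
Proof. by apply/setP=> x; rewrite in_set nth_mask_index. Qed.

Lemma mask_in b : mask b \in M.
Proof. by rewrite mem_allm size_mask. Qed.

Lemma allmaskP (P : pred (seq bool)) : reflect (forall b, P (mask b)) (all P M).
Proof.
apply: (iffP allP) => [H b|H m]; first exact: H (mask_in b).
by rewrite mem_allm => /eqP Hm; rewrite -(mask_set Hm).
Qed.

Lemma hasmaskP (P : pred (seq bool)) : reflect (exists b, P (mask b)) (has P M).
Proof.
apply: (iffP hasP).
  move=> [m]; rewrite mem_allm => /eqP Hm; rewrite -(mask_set Hm) => H.
  by exists (set_of m).
by move=> [b Hb]; exists (mask b); rewrite ?mask_in.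
Qed.

Definition subm (a c : seq bool) :=
  all (fun i => nth false a i ==> nth false c i) (iota 0 n).
Definition meetm (a c : seq bool) :=
  has (fun i => nth false a i && nth false c i) (iota 0 n).
Definition nonem (a : seq bool) := has (fun i => nth false a i) (iota 0 n).

Lemma subm_mask b c : subm (mask b) (mask c) = (b \subset c).
Proof.
apply/allP/subsetP => [H x xb|H i].
  have := H (index x xs); rewrite !nth_mask_index xb mem_iota add0n index_mem Hall.
  by move=> /(_ isT).
rewrite mem_iota add0n => Hi; rewrite !nth_mask //; apply/implyP; exact: H.
Qed.

Lemma meetm_mask b c : meetm (mask b) (mask c) = (b :&: c != set0).
Proof.
apply/hasP/set0Pn => [[i]|[x]].
  rewrite mem_iota add0n => Hi; rewrite !nth_mask // => H.
  by exists (nth x0 xs i); rewrite inE.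
rewrite inE => H; exists (index x xs); first by rewrite mem_iota add0n index_mem Hall.
by rewrite !nth_mask_index.
Qed.

Lemma nonem_mask b : nonem (mask b) = (b != set0).
Proof.
apply/hasP/set0Pn => [[i]|[x]].
  by rewrite mem_iota add0n => Hi; rewrite !nth_mask // => H; exists (nth x0 xs i).
move=> H; exists (index x xs); first by rewrite mem_iota add0n index_mem Hall.
by rewrite !nth_mask_index.
Qed.

Definition fam (p : pred (seq bool)) : {set {set X}} := [set b | p (mask b)].

Lemma eqfamP p q : fam p = fam q <-> all (fun m => p m == q m) M.
Proof.
split => [H|/allmaskP H].
  apply/allmaskP => b; apply/eqP.
  by have /setP/(_ b) := H; rewrite !in_set.
by apply/setP => b; rewrite !in_set; apply/eqP.
Qed.

Lemma maxlinkedE (F : {set {set X}}) : maxlinked F <->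
  [/\ upfamily F, linked F & forall b, b != set0 -> b \notin F ->
     exists2 a, a \in F & a :&: b == set0].
Proof.
split => [[Hup Hl Hmax]|[Hup Hl Hc]]; split => //.
  move=> b bn bF.
  case: (boolP [exists a in F, a :&: b == set0]) => [/existsP[a /andP[aF ab]]|H].
    by exists a.
  have Hm a : a \in F -> a :&: b != set0.
    by move=> aF; apply: contra H => ab; apply/existsP; exists a; rewrite aF.
  pose B := F :|: [set c : {set X} | b \subset c].
  have : B = F.
    apply: Hmax; last exact: subsetUl.
    + move=> a; rewrite !inE => /orP[aF|ba].
        split; first by case: (Hup a aF).
        by move=> c ac; rewrite inE (Hup a aF).2.
      split.
        by apply: contraNneq bn => a0; move: ba; rewrite a0 subset0.
      by move=> c ac; rewrite !inE (subset_trans ba ac) orbT.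
    + move=> a c; rewrite !inE => /orP[aF|ba] /orP[cF|bc].
      * exact: Hl.
      * apply: contraNneq (Hm a aF) => ac; rewrite -subset0 -ac.
        exact: setIS.
      * apply: contraNneq (Hm c cF) => ac; rewrite -subset0 -ac setIC.
        exact: setSI.
      * by apply: contraNneq bn => ac; rewrite -subset0 -ac subsetI ba bc.
  by move=> /setP/(_ b); rewrite !inE subxx orbT (negbTE bF).
move=> B Bup Bl FB; apply/eqP; rewrite eqEsubset FB andbT.
apply/subsetP => c cB; case: (boolP (c \in F)) => // cF.
have [cn _] := Bup c cB.
have [a aF ac] := Hc c cn cF.
by have := Bl a c (subsetP FB a aF) cB; rewrite ac.
Qed.

Definition mlbc (p : pred (seq bool)) :=
  [&& all (fun m => p m ==> nonem m && all (fun m' => subm m m' ==> p m') M) M,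
      all (fun m => all (fun m' => p m ==> p m' ==> meetm m m') M) M &
      all (fun m => nonem m ==> p m || has (fun m' => p m' && ~~ meetm m' m) M) M].

Lemma mlbcP p : maxlinked (fam p) <-> mlbc p.
Proof.
split; first move/maxlinkedE; last (move=> H; apply/maxlinkedE; move: H).
  move=> [Hup Hl Hc]; apply/and3P; split.
  - apply/allmaskP => b; apply/implyP => pb.
    have [H1 H2] := Hup b ltac:(by rewrite in_set).
    rewrite nonem_mask H1 /=; apply/allmaskP => c; rewrite subm_mask.
    by apply/implyP => /H2; rewrite in_set.
  - apply/allmaskP => b; apply/allmaskP => c; apply/implyP => pb; apply/implyP => pc.
    by rewrite meetm_mask; apply: Hl; rewrite in_set.
  - apply/allmaskP => b; rewrite nonem_mask; apply/implyP => bn.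
    case: (boolP (p (mask b))) => //= pb.
    have [a aF ab] := Hc b bn ltac:(by rewrite in_set).
    apply/hasmaskP; exists a; rewrite meetm_mask ab negbK andbT.
    by rewrite in_set in aF.
move=> /and3P[/allmaskP H1 /allmaskP H2 /allmaskP H3]; split.
- move=> a; rewrite in_set => pa; have := H1 a; rewrite pa /= nonem_mask.
  case/andP => -> /allmaskP H; split => // c ac; rewrite in_set.
  by have := H c; rewrite subm_mask ac.
- move=> a c; rewrite !in_set => pa pc.
  by have /allmaskP/(_ c) := H2 a; rewrite pa pc meetm_mask.
- move=> b bn; rewrite in_set => pb; have := H3 b.
  rewrite nonem_mask bn (negbTE pb) /= => /hasmaskP[a /andP[pa]].
  by rewrite meetm_mask negbK => ab; exists a; rewrite ?in_set.
Qed.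

Variable op : X -> X -> X.

Lemma lam_opE (cA cB : {set {set X}}) : upfamily cA -> upfamily cB ->
  lam_op op cA cB = [set C : {set X} | [set a | [set b | op a b \in C] \in cB] \in cA].
Proof.
move=> HA HB; apply/setP => C; rewrite !inE; apply/idP/idP.
  case/existsP => A /andP[AcA /existsP[f /andP[/forallP Hf Hsub]]].
  apply: (HA A AcA).2; apply/subsetP => a aA; rewrite inE.
  have fa : f a \in cB by have := Hf a; rewrite aA.
  apply: (HB _ fa).2; apply/subsetP => b fb; rewrite inE.
  apply: (subsetP Hsub); apply/bigcupP; exists a => //.
  by apply/imsetP; exists b.
move=> HD; apply/existsP; exists [set a | [set b | op a b \in C] \in cB].
rewrite HD /=; apply/existsP; exists [ffun a => [set b | op a b \in C]].
apply/andP; split.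
  by apply/forallP => a; apply/implyP; rewrite inE ffunE.
apply/subsetP => c /bigcupP[a aD]; rewrite ffunE => /imsetP[b].
by rewrite inE => Hb ->.
Qed.

Definition lamc (p q : pred (seq bool)) : pred (seq bool) := fun mC =>
  p [seq q [seq nth false mC (index (op x y) xs) | y <- xs] | x <- xs].

Lemma lam_fam p q : upfamily (fam p) -> upfamily (fam q) ->
  lam_op op (fam p) (fam q) = fam (lamc p q).
Proof.
move=> Hp Hq; rewrite lam_opE //; apply/setP => C; rewrite !in_set /lamc.
congr p; rewrite /mask; apply: eq_map => x; rewrite !in_set /mask; congr q.
by apply: eq_map => y; rewrite in_set nth_mask_index.
Qed.

Definition M1 := [seq m <- M | head false m].
Definition decc (l : seq (seq bool)) : pred (seq bool) := fun m =>
  if head false m then m \in l else map negb m \notin l.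

Lemma surj_fam (F : {set {set X}}) : 0 < n -> maxlinked F ->
  F = fam (decc [seq m <- M1 | set_of m \in F]).
Proof.
move=> n0 /maxlinkedE[Hup Hl Hc].
have hd b : head false (mask b) = (nth x0 xs 0 \in b).
  by rewrite -nth0 nth_mask.
have TF : setT \in F.
  have Tn : [set: X] != set0 by apply/set0Pn; exists x0.
  case: (boolP (setT \in F)) => // TF; have [a aF] := Hc _ Tn TF.
  by rewrite setIT => /eqP a0; have [] := Hup a aF; rewrite a0 eqxx.
apply/setP => b; rewrite in_set /decc hd.
case: ifP => Hb.
  by rewrite mem_filter set_mask mem_filter hd Hb mask_in /= andbT.
have -> : map negb (mask b) = mask (~: b).
  by rewrite /mask -map_comp; apply: eq_map => x; rewrite /= inE.
rewrite mem_filter set_mask mem_filter hd inE Hb mask_in /= andbT.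
case: (boolP (b \in F)) => bF; case: (boolP (~: b \in F)) => cF //.
  by have := Hl _ _ bF cF; rewrite setICr eqxx.
case: (boolP (b == set0)) => [/eqP b0|bn].
  by move: cF; rewrite b0 setC0 TF.
have [a aF /eqP ab] := Hc b bn bF.
have : a \subset ~: b.
  apply/subsetP => x xa; rewrite inE; apply/negP => xb.
  have : x \in a :&: b by rewrite inE xa xb.
  by rewrite ab inE.
by move/((Hup a aF).2); rewrite (negbTE cF).
Qed.

End Gen.

Section Main.
Variables S T : fsemigroup.
Variables (xs : seq (sg_car S)) (x0 : sg_car S) (ts : seq (sg_car T)).
Variable gc : sg_car T -> pred (seq bool).
Variable opS : sg_car S -> sg_car S -> sg_car S.
Variable opT : sg_car T -> sg_car T -> sg_car T.
Local Notation M := (allm (size xs)).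
Local Notation mlbc := (mlbc xs).
Local Notation lamc := (lamc xs opS).

Definition check :=
  [&& all (fun t => mlbc (gc t)) ts,
      all (fun t => all (fun t' => all (fun m => gc t m == gc t' m) M ==> (t == t')) ts) ts,
      all (fun t => all (fun t' =>
         all (fun m => gc (opT t t') m == lamc (gc t) (gc t') m) M) ts) ts &
      all (fun l => mlbc (decc l) ==> has (fun t => all (fun m => gc t m == decc l m) M) ts)
          (subs (M1 xs))].

Theorem iso_of_check : @sg_op S =2 opS -> @sg_op T =2 opT ->
  uniq xs -> (forall x, x \in xs) -> (forall t, t \in ts) ->
  0 < size xs -> check -> lambda_iso S T.
Proof.
move=> HS HT Hu Hall Hts n0 /and4P[/allP c1 /allP c2 /allP c3 /allP c4].
exists (fun t => fam xs (gc t)); split.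
- move=> t t' /(eqfamP x0 Hu) H.
  by have := allP (c2 t (Hts t)) t' (Hts t'); rewrite H => /eqP.
- move=> F; split.
    move=> HF; have FE := surj_fam x0 Hall n0 HF.
    have Hm : mlbc (decc [seq m <- M1 xs | set_of xs m \in F]).
      by apply/(mlbcP x0 Hu Hall); rewrite -FE.
    have := c4 _ (filter_subs (M1 xs) (fun m => set_of xs m \in F)).
    rewrite Hm /= => /hasP[t _ Ht].
    by exists t; rewrite FE; apply/(eqfamP x0 Hu).
  by move=> [t <-]; apply/(mlbcP x0 Hu Hall)/c1.
- move=> t t'.
  have up u : upfamily (fam xs (gc u)).
    by case/(mlbcP x0 Hu Hall): (c1 u (Hts u)).
  rewrite (lam_fam x0 Hall) //; apply/(eqfamP x0 Hu).
  apply/allP => m mM; have /allP/(_ m mM) := allP (c3 t (Hts t)) t' (Hts t').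
  rewrite HT /Submission.lamc /lamc.
  have -> : [seq gc t' [seq nth false m (index (sg_op x y) xs) | y <- xs] | x <- xs] =
            [seq gc t' [seq nth false m (index (opS x y) xs) | y <- xs] | x <- xs].
    by apply: eq_map => x; congr gc; apply: eq_map => y; rewrite HS.
  by [].
Qed.
End Main.

Definition opC2 (a b : 'I_2) : 'I_2 := Ordinal (ltn_pmod (a + b) (isT : 0 < 2)).
Definition C2' := @FSG 'I_2 opC2.
Lemma opC2E : @sg_op C2 =2 opC2.
Proof. by move=> a b; apply: val_inj; rewrite /= inordK // ltn_pmod. Qed.

Definition S1 := sg_union (L 1) C2.
Definition T1 := sg_union (sg_union (L 1) (L 1)) C2.
Definition S1' := sg_union (L 1) C2'.
Definition T1' := sg_union (sg_union (L 1) (L 1)) C2'.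
Definition o1 : 'I_2 := @Ordinal 2 1 isT.
Definition xs1 : seq (sg_car S1) := [:: inl ord0; inr ord0; inr o1].
Definition ts1 : seq (sg_car T1) := [:: inl (inl ord0); inl (inr ord0); inr ord0; inr o1].
Definition gc1 (t : sg_car T1) (m : seq bool) : bool :=
  match t with
  | inl (inl _) => nth false m 0
  | inl (inr _) => 1 < count id m
  | inr o => nth false m (nat_of_ord o).+1
  end.

Definition S2 := sg_prod (L 2) C2.
Definition T2 := sg_prod (sg_union (sg_union (L 1) (sg_prod (L 2) (L 2))) (L 1)) C2.
Definition S2' := sg_prod (L 2) C2'.
Definition T2' := sg_prod (sg_union (sg_union (L 1) (sg_prod (L 2) (L 2))) (L 1)) C2'.
Definition xs2 : seq (sg_car S2) := [:: (ord0, ord0); (ord0, o1); (o1, ord0); (o1, o1)].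
Definition ss2 : seq (sg_car (sg_union (sg_union (L 1) (sg_prod (L 2) (L 2))) (L 1))) :=
  [:: inl (inl ord0); inr ord0] ++
  [seq inl (inr p) | p <- [:: (ord0, ord0); (ord0, o1); (o1, ord0); (o1, o1)]].
Definition ts2 : seq (sg_car T2) := [seq (s, c) | s <- ss2, c <- [:: ord0; o1]].
Definition star (x : nat) (m : seq bool) := nth false m x && (1 < count id m) || (2 < count id m).
Definition maj (x : nat) (m : seq bool) := 1 < count id m - nth false m x.
Definition gc2 (t : sg_car T2) (m : seq bool) : bool :=
  let c := nat_of_ord t.2 in
  match t.1 with
  | inl (inl _) => nth false m c
  | inr _ => nth false m (2 + c)
  | inl (inr (a, b)) =>
      if nat_of_ord a == nat_of_ord b then star (2 * a + c) m
      else maj (if nat_of_ord a == 0 then 3 - c else 1 - c) m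
  end.

Lemma I2E (a : 'I_2) : a = ord0 \/ a = o1.
Proof. by case: a => [[|[|k]] Hk] //; [left|right]; apply: val_inj. Qed.

Lemma eS1 : @sg_op S1 =2 @sg_op S1'.
Proof. by case=> a [b|b] //=; congr inr; exact: opC2E. Qed.
Lemma eT1 : @sg_op T1 =2 @sg_op T1'.
Proof. by case=> [[a|a]|a] [[b|b]|b] //=; congr inr; exact: opC2E. Qed.
Lemma eS2 : @sg_op S2 =2 @sg_op S2'.
Proof. by case=> a g [b h] /=; congr pair; exact: opC2E. Qed.
Lemma eT2 : @sg_op T2 =2 @sg_op T2'.
Proof. by case=> a g [b h] /=; congr pair; exact: opC2E. Qed.

Lemma cov1 : forall x : sg_car S1, x \in xs1.
Proof. by case=> a; [rewrite (ord1 a) | case: (I2E a) => ->]. Qed.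
Lemma covT1 : forall x : sg_car T1, x \in ts1.
Proof. by case=> [[a|a]|a]; [rewrite (ord1 a)|rewrite (ord1 a)| case: (I2E a) => ->]. Qed.
Lemma cov2 : forall x : sg_car S2, x \in xs2.
Proof. by case=> a b; case: (I2E a) => ->; case: (I2E b) => ->. Qed.
Lemma covT2 : forall x : sg_car T2, x \in ts2.
Proof.
case=> [[[a|[a b]]|a] c]; case: (I2E c) => ->;
  rewrite ?(ord1 a) //; case: (I2E a) => ->; case: (I2E b) => ->; by vm_compute.
Qed.

Theorem proposition4p1 :
  lambda_iso (sg_union (L 1) C2) (sg_union (sg_union (L 1) (L 1)) C2) /\
  lambda_iso (sg_prod (L 2) C2)
             (sg_prod (sg_union (sg_union (L 1) (sg_prod (L 2) (L 2))) (L 1)) C2).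
Proof.
split.
  apply: (@iso_of_check S1 T1 xs1 (inl ord0) ts1 gc1 _ _ eS1 eT1 _ cov1 covT1);
    vm_compute; reflexivity.
apply: (@iso_of_check S2 T2 xs2 (ord0, ord0) ts2 gc2 _ _ eS2 eT2 _ cov2 covT2);
  vm_compute; reflexivity.
Qed.
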